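(* Let $\rho$ and $\sigma$ be Hermitian matrices acting on the same finite-dimensional complex Hilbert space such that $\operatorname{tr}(\rho^{2})\le 1$ and $\operatorname{tr}(\sigma^{2})\le 1$, with $\max[\operatorname{tr}(\rho^2),\operatorname{tr}(\sigma^2)]>0$. Then $$\frac{\operatorname{tr}(\rho\sigma)}{\max[\operatorname{tr}(\rho^{2}),\operatorname{tr}(\sigma^{2})]}\;\le\;\operatorname{tr}(\rho\sigma)+\sqrt{1-\operatorname{tr}(\rho^{2})}\,\sqrt{1-\operatorname{tr}(\sigma^{2})}.$$ That is, $\mathcal{F}_2(\rho,\sigma)\le\mathcal{F}_{N}(\rho,\sigma)$.
   Context: The Hilbert–Schmidt fidelity is $\mathcal{F}_2(\rho,\sigma)=\operatorname{tr}(\rho\sigma)/\max[\operatorname{tr}(\rho^2),\operatorname{tr}(\sigma^2)]$ (defined when the denominator is nonzero), and the super-fidelity is $\mathcal{F}_N(\rho,\sigma)=\operatorname{tr}(\rho\sigma)+\sqrt{1-\operatorname{tr}(\rho^2)}\sqrt{1-\operatorname{tr}(\sigma^2)}$. *)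

(* Defs.v *)
From HB Require Import structures.
From mathcomp Require Import all_boot all_order all_algebra.
From mathcomp Require Import reals.
From mathcomp Require Export complex.
Set Implicit Arguments. Unset Strict Implicit. Unset Printing Implicit Defensive.
Import Order.TTheory GRing.Theory Num.Theory.
Local Open Scope ring_scope.

Definition is_hermitian (C : numClosedFieldType) (n : nat) (A : 'M[C]_n) : Prop :=
  A^T = map_mx Num.conj A.

Definition HS_fidelity (C : numClosedFieldType) (n : nat) (rho sigma : 'M[C]_n) : C :=
  \tr (rho *m sigma) / Num.max (\tr (rho *m rho)) (\tr (sigma *m sigma)).

Definition super_fidelity (C : numClosedFieldType) (n : nat) (rho sigma : 'M[C]_n) : C :=
  \tr (rho *m sigma) + sqrtC (1 - \tr (rho *m rho)) * sqrtC (1 - \tr (sigma *m sigma)).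

(* Main.v *)
Require Import Defs.
From HB Require Import structures.
From mathcomp Require Import all_boot all_order all_algebra.
From mathcomp Require Import reals complex ring lra.
Import Order.TTheory GRing.Theory Num.Theory.
Set Implicit Arguments.
Local Open Scope ring_scope.

Lemma hermE (C : numClosedFieldType) n (X : 'M[C]_n) i j :
  is_hermitian X -> X j i = (X i j)^*.
Proof. by move=> hX; have := congr1 (fun M : 'M[C]_n => M i j) hX; rewrite !mxE. Qed.

Lemma tr_herm_ge0 (C : numClosedFieldType) n (X : 'M[C]_n) :
  is_hermitian X -> 0 <= \tr (X *m X).
Proof.
move=> hX; rewrite /mxtrace; apply: sumr_ge0 => i _; rewrite mxE.
apply: sumr_ge0 => j _; rewrite (hermE i j hX); exact: mul_conjC_ge0.
Qed.

Lemma tr_herm_real (C : numClosedFieldType) n (X Y : 'M[C]_n) :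
  is_hermitian X -> is_hermitian Y -> \tr (X *m Y) \is Num.real.
Proof.
move=> hX hY; rewrite CrealE; apply/eqP.
rewrite [RHS]mxtrace_mulC /mxtrace rmorph_sum.
under eq_bigr do rewrite mxE rmorph_sum.
apply: eq_bigr => i _; rewrite !mxE.
apply: eq_bigr => j _; rewrite rmorphM /=.
by rewrite -(hermE i j hX) -(hermE j i hY) mulrC.
Qed.

Lemma herm_lin (C : numClosedFieldType) n (X Y : 'M[C]_n) t :
  is_hermitian X -> is_hermitian Y -> t \is Num.real -> is_hermitian (X - t *: Y).
Proof.
move=> hX hY ht; apply/matrixP => i j; rewrite !mxE.
rewrite (hermE i j hX) (hermE i j hY) rmorphB rmorphM /=.
by move: ht; rewrite CrealE => /eqP ->.
Qed.

Lemma quad (C : numClosedFieldType) n (X Y : 'M[C]_n) t :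
  is_hermitian X -> is_hermitian Y -> t \is Num.real ->
  0 <= \tr (X *m X) - 2 * t * \tr (X *m Y) + t ^+ 2 * \tr (Y *m Y).
Proof.
move=> hX hY ht; have := tr_herm_ge0 (@herm_lin _ _ X Y t hX hY ht).
rewrite mulmxBl !mulmxBr -!scalemxAl -!scalemxAr !linearB /= !linearZ /=.
rewrite [\tr (Y *m X)]mxtrace_mulC /=.
suff -> : \tr (X *m X) - t * \tr (X *m Y) - (t * \tr (X *m Y) - t * (t * \tr (Y *m Y)))
  = \tr (X *m X) - 2 * t * \tr (X *m Y) + t ^+ 2 * \tr (Y *m Y) by [].
ring.
Qed.
Lemma key (R : realFieldType) (A B C S U : R) :
  0 <= A -> A <= B -> 0 < B -> B <= 1 -> C ^+ 2 <= A * B ->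
  0 <= S -> 0 <= U -> S ^+ 2 = 1 - A -> U ^+ 2 = 1 - B ->
  C / B <= C + S * U.
Proof.
move=> A0 AB B0 B1 hC S0 U0 hS hU.
rewrite ler_pdivrMr //.
have h1 : C * (1 - B) <= B * (S * U); last by nra.
have hSU : 0 <= S * U by exact: mulr_ge0.
have [C0|C0] := lerP C 0.
  have : C * (1 - B) <= 0 by nra.
  have : 0 <= B * (S * U) by exact: mulr_ge0 (ltW B0) hSU.
  lra.
have hsq : (C * (1 - B)) ^+ 2 <= (B * (S * U)) ^+ 2.
  rewrite !exprMn hS hU.
  have : C ^+ 2 * (1 - B) ^+ 2 <= A * B * (1 - B) ^+ 2.
    apply: ler_wpM2r => //; exact: sqr_ge0.
  have : 0 <= B * (1 - B) * (B - A).
    apply: mulr_ge0; [apply: mulr_ge0; lra | lra].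
  nra.
have p1 : 0 <= C * (1 - B) by nra.
have p2 : 0 <= B * (S * U) by exact: mulr_ge0 (ltW B0) hSU.
by rewrite -(ler_pXn2r (_ : 0 < 2)%N) // nnegrE.
Qed.

Lemma csq (R : realFieldType) (A B C : R) : 0 < B ->
  (forall T, 0 <= A - 2 * T * C + T ^+ 2 * B) -> C ^+ 2 <= A * B.
Proof.
move=> B0 hq; have := hq (C / B).
have e : A - 2 * (C / B) * C + (C / B) ^+ 2 * B = (A * B - C ^+ 2) / B.
  by field; rewrite gt_eqF.
rewrite e => h; have := mulr_ge0 h (ltW B0); by rewrite divfK ?gt_eqF // subr_ge0.
Qed.

Lemma sq_real (R : realType) (A : R) : 0 <= 1 - A ->
  exists S, sqrtC ((1 - A)%:C%C) = S%:C%C /\ 0 <= S /\ S ^+ 2 = 1 - A.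
Proof.
move=> h.
have s0 : 0 <= sqrtC ((1 - A)%:C%C) by rewrite sqrtC_ge0 ler0c.
have /complex_realP [S eS] := ger0_real s0.
exists S; split => //; split; first by rewrite -ler0c -eS.
apply: complexI; rewrite rmorphXn /= -eS sqrtCK //.
Qed.

Theorem theorem1 (R : realType) (n : nat) (rho sigma : 'M[R[i]]_n) :
  is_hermitian rho -> is_hermitian sigma ->
  \tr (rho *m rho) <= 1 -> \tr (sigma *m sigma) <= 1 ->
  0 < Num.max (\tr (rho *m rho)) (\tr (sigma *m sigma)) ->
  HS_fidelity rho sigma <= super_fidelity rho sigma.
Proof.
move=> hr hs ha hb hm.
have a0 := tr_herm_ge0 hr; have b0 := tr_herm_ge0 hs.
have q1 := fun t => @quad _ _ rho sigma t hr hs; have q2 := fun t => @quad _ _ sigma rho t hs hr.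
rewrite [\tr (sigma *m rho)]mxtrace_mulC in q2.
move: (tr_herm_real hr hr) => /complex_realP [A eA].
move: (tr_herm_real hs hs) => /complex_realP [B eB].
move: (tr_herm_real hr hs) => /complex_realP [Cc eC].
rewrite /HS_fidelity /super_fidelity.
rewrite eA eB eC in ha hb hm a0 b0 q1 q2 *.
have qR : forall (X Y : R), (forall t : R[i], t \is Num.real ->
    0 <= X%:C%C - 2 * t * Cc%:C%C + t ^+ 2 * Y%:C%C) ->
    forall T, 0 <= X - 2 * T * Cc + T ^+ 2 * Y.
  move=> X Y q T; have := q (T%:C%C).
  have rT : T%:C%C \is Num.real by apply/complex_realP; exists T.
  move=> /(_ rT).
  rewrite -ler0c !(rmorphD, rmorphB, rmorphM, rmorphN, rmorphXn, rmorph_nat, rmorph1); exact: id.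
have hq1 := qR _ _ q1; have hq2 := qR _ _ q2.
have {}ha : A <= 1 by rewrite -lecR rmorph1; exact: ha.
have {}hb : B <= 1 by rewrite -lecR rmorph1; exact: hb.
move: a0 b0; rewrite !ler0c => a0 b0.
have -> : (1 - A%:C%C : R[i]) = (1 - A)%:C%C by rewrite rmorphB rmorph1.
have -> : (1 - B%:C%C : R[i]) = (1 - B)%:C%C by rewrite rmorphB rmorph1.
have hA1 : 0 <= 1 - A by rewrite subr_ge0.
have [S [eS [S0 S2]]] := @sq_real R A hA1.
have hB1 : 0 <= 1 - B by rewrite subr_ge0.
have [U [eU [U0 U2]]] := @sq_real R B hB1.
rewrite eS eU.
have [AB|BA] := lerP A B.
  have hx : Num.max A%:C%C B%:C%C = B%:C%C by rewrite max_r // lecR.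
  rewrite hx ltcR in hm; rewrite hx.
  rewrite -fmorph_div -rmorphM -rmorphD lecR.
  apply: (@key _ A B Cc S U) => //; exact: csq hm hq1.
have hx : Num.max A%:C%C B%:C%C = A%:C%C by rewrite max_l // lecR ltW.
rewrite hx ltcR in hm; rewrite hx.
rewrite -fmorph_div -rmorphM -rmorphD lecR [S * U]mulrC.
apply: (@key _ B A Cc U S) => //; first exact: ltW.
exact: (@csq _ B A Cc hm hq2).
Qed.
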